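(* Let $(X,d,A)$ be a metric pair and $p\in[1,\infty]$. If $(X,d)$ is compact, then $(D^n(X,A),W_p)$ is compact for every $n\in\mathbb{N}$.
   Context: A metric on $X$ is a map $d:X\times X\to[0,\infty]$ with $d(x,x)=0$, symmetry and the triangle inequality (infinite distances allowed, $d(x,y)=0$ need not imply $x=y$); a metric pair $(X,d,A)$ is such a space with a closed subset $A$. $D^n(X,A)$ is the set of formal sums $\sum_{i=1}^m x_i$ of points of $X\setminus A$ with $0\le m\le n$ (repetitions allowed). A matching of $\hat\alpha=\sum_{i\in I}x_i$, $\hat\beta=\sum_{j\in J}y_j$ is a formal sum $\sum_{k\in K}(x_k,y_{\varphi(k)})+\sum_{i\in I\setminus K}(x_i,z_i)+\sum_{j\in J\setminus\varphi(K)}(w_j,y_j)$ with $K\subset I$, $\varphi$ injective, $z_i,w_j\in A$; its $p$-cost is the $\ell^p$ norm (sup norm if $p=\infty$) of the distances of paired points; $W_p$ is the infimum of $p$-costs over matchings. *)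

(* Defs.v *)
From HB Require Import structures.
From mathcomp Require Import all_boot all_order all_algebra.
From mathcomp Require Import all_classical all_reals ereal exp.
Set Implicit Arguments. Unset Strict Implicit. Unset Printing Implicit Defensive.
Import Order.TTheory GRing.Theory Num.Theory.
Local Open Scope classical_set_scope.
Local Open Scope ring_scope.

(** Extended (pseudo)metric: values in [0, +oo], d x x = 0, symmetric,
    triangle inequality; d x y = 0 need not imply x = y. *)
Definition is_metric (R : realType) (T : Type) (d : T -> T -> \bar R) : Prop :=
  [/\ (forall x y, (0 <= d x y)%E),
      (forall x, d x x = 0%E),
      (forall x y, d x y = d y x) &
      (forall x y z, (d x z <= d x y + d y z)%E)].

Definition open_in (R : realType) (T : Type) (d : T -> T -> \bar R)
    (S U : set T) : Prop :=
  U `<=` S /\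
  forall x, U x -> exists r : R, 0 < r /\
    forall y, S y -> (d x y < r%:E)%E -> U y.

Definition closed_set (R : realType) (T : Type) (d : T -> T -> \bar R)
    (A : set T) : Prop :=
  open_in d setT (~` A).

Definition compact_in (R : realType) (T : Type) (d : T -> T -> \bar R)
    (S : set T) : Prop :=
  forall (I : Type) (U : I -> set T),
    (forall i, open_in d S (U i)) ->
    S `<=` \bigcup_i U i ->
    exists (m : nat) (F : 'I_m -> I), S `<=` \bigcup_k U (F k).

(** D^n(X, A): formal sums of at most n points of X \ A, represented as
    finite lists (the order is irrelevant for W_p). *)
Definition Dn (T : Type) (A : set T) (n : nat) : set (seq T) :=
  [set s | (size s <= n)%N /\ forall i : 'I_(size s), ~ A (tnth (in_tuple s) i)].

Definition lp_norm (R : realType) (p : \bar R) (l : seq (\bar R)) : \bar R :=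
  match p with
  | r%:E => ((\sum_(e <- l) (e `^ r)) `^ (r^-1))%E
  | _ => (\big[Order.max/0%E]_(e <- l) e)%E
  end.

(** A matching of xs = sum_i x_i and ys = sum_j y_j:
    phi i = Some j means x_i is paired with y_j (phi injective on its
    support, i.e. K = {i | phi i <> None}); otherwise x_i is paired with
    z i in A; every y_j not in the image of phi is paired with w j in A.
    matching_costs lists the distances of paired points. *)
Definition is_matching (T : Type) (A : set T) (xs ys : seq T)
    (phi : 'I_(size xs) -> option 'I_(size ys))
    (z : 'I_(size xs) -> T) (w : 'I_(size ys) -> T) : Prop :=
  [/\ (forall i i' j, phi i = Some j -> phi i' = Some j -> i = i'),
      (forall i, phi i = None -> A (z i)) &
      (forall j, (forall i, phi i <> Some j) -> A (w j))].

Definition matching_costs (R : realType) (T : Type) (d : T -> T -> \bar R)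
    (xs ys : seq T)
    (phi : 'I_(size xs) -> option 'I_(size ys))
    (z : 'I_(size xs) -> T) (w : 'I_(size ys) -> T) : seq (\bar R) :=
  [seq match phi i with
       | Some j => d (tnth (in_tuple xs) i) (tnth (in_tuple ys) j)
       | None => d (tnth (in_tuple xs) i) (z i)
       end | i <- enum 'I_(size xs)]
  ++ [seq d (w j) (tnth (in_tuple ys) j)
       | j <- enum 'I_(size ys) & [forall i, phi i != Some j]].

Definition Wp (R : realType) (T : Type) (d : T -> T -> \bar R) (A : set T)
    (p : \bar R) (xs ys : seq T) : \bar R :=
  ereal_inf [set c | exists phi z w,
     @is_matching T A xs ys phi z w /\
     c = lp_norm p (matching_costs d phi z w)].

(* Main.v *)
Require Import Defs.
From HB Require Import structures.
From mathcomp Require Import all_boot all_order all_algebra.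
From mathcomp Require Import all_classical all_reals ereal exp.
From Stdlib Require Lists.List.
Local Open Scope classical_set_scope.
Local Open Scope ring_scope.
Set Implicit Arguments. Unset Strict Implicit. Unset Printing Implicit Defensive.
Import Order.TTheory GRing.Theory Num.Theory.

Lemma In_catl (T : Type) (i : T) (s1 s2 : seq T) : Stdlib.Lists.List.In i s1 -> Stdlib.Lists.List.In i (s1 ++ s2).
Proof. elim: s1 => //= a s IH [->|h]; [by left | by right; apply: IH]. Qed.

Lemma In_catr (T : Type) (i : T) (s1 s2 : seq T) : Stdlib.Lists.List.In i s2 -> Stdlib.Lists.List.In i (s1 ++ s2).
Proof. elim: s1 => //= a s IH h; right; exact: IH. Qed.

Lemma In_map (T1 T2 : Type) (f : T1 -> T2) a (s : seq T1) : Stdlib.Lists.List.In a s -> Stdlib.Lists.List.In (f a) (map f s).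
Proof. elim: s => //= b s IH [->|h]; [by left | by right; apply: IH]. Qed.

Lemma In_flatten (T : Type) (i : T) (s : seq T) ss : Stdlib.Lists.List.In s ss -> Stdlib.Lists.List.In i s -> Stdlib.Lists.List.In i (flatten ss).
Proof.
elim: ss => //= s' ss IH [->|h] hi; first exact: In_catl.
apply: In_catr; exact: IH.
Qed.

Lemma In_mem (T : eqType) (x : T) s : x \in s -> Stdlib.Lists.List.In x s.
Proof. elim: s => //= a s IH; rewrite in_cons => /orP [/eqP ->|h]; [by left|by right; apply: IH]. Qed.

Lemma In_enum m (j : 'I_m) : Stdlib.Lists.List.In j (enum 'I_m).
Proof. apply: In_mem; by rewrite mem_enum. Qed.

Lemma In_nth (T : Type) (i : T) s : Stdlib.Lists.List.In i s -> exists j, (j < size s)%N /\ nth i s j = i.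
Proof.
elim: s => //= a s IH [->|h]; first by exists 0%N.
have [j [hj hn]] := IH h; exists j.+1; split => //.
Qed.

Lemma fin_of_list (T I : Type) (S : set T) (U : I -> set T) (s : seq I) :
  (forall x, S x -> exists i, Stdlib.Lists.List.In i s /\ U i x) ->
  exists (m : nat) (F : 'I_m -> I), S `<=` \bigcup_k U (F k).
Proof.
move=> h; exists (size s), (tnth (in_tuple s)) => x /h [i [hi hU]].
have [j [hj hn]] := In_nth hi.
exists (Ordinal hj) => //; by rewrite (tnth_nth i) /= hn.
Qed.

Lemma list_of_fin (T I : Type) (S : set T) (U : I -> set T) m (F : 'I_m -> I) :
  S `<=` \bigcup_k U (F k) ->
  forall x, S x -> exists i, Stdlib.Lists.List.In i (map F (enum 'I_m)) /\ U i x.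
Proof.
move=> h x /h [j _ hj]; exists (F j); split => //; apply: In_map; exact: In_enum.
Qed.

Section Gen.
Variable R : realType.

Lemma interior_open (T : Type) (dd : T -> T -> \bar R) (W P : set T) :
  (forall x y, (0 <= dd x y)%E) ->
  (forall x y z, (dd x z <= dd x y + dd y z)%E) ->
  open_in dd W [set x | W x /\ exists t : R, 0 < t /\ forall y, W y -> (dd x y < t%:E)%E -> P y].
Proof.
move=> h0 htri; split; first by move=> x [].
move=> x [Wx [t [t0 ht]]]; exists (t / 2); split; first by rewrite divr_gt0.
move=> y Wy hxy; split => //; exists (t / 2); split; first by rewrite divr_gt0.
move=> y' Wy' hyy'; apply: ht => //.
apply: (le_lt_trans (htri x y y')).
rewrite [t](splitr t) EFinD; exact: lteD.
Qed.

Lemma compact_image (T1 T2 : Type) (d1 : T1 -> T1 -> \bar R) (d2 : T2 -> T2 -> \bar R)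
  (S1 : set T1) (f : T1 -> T2) :
  compact_in d1 S1 ->
  (forall x, S1 x -> forall e : R, 0 < e -> exists del : R, 0 < del /\
     forall y, S1 y -> (d1 x y < del%:E)%E -> (d2 (f x) (f y) < e%:E)%E) ->
  compact_in d2 (f @` S1).
Proof.
move=> hc hf I U hU hcov.
have := hc I (fun i => [set x | S1 x /\ U i (f x)]).
case.
- move=> i; split; first by move=> x [].
  move=> x [S1x Ux]; have [_ hUi] := hU i.
  have [r [r0 hr]] := hUi _ Ux.
  have [del [del0 hdel]] := hf x S1x r r0.
  exists del; split => // y S1y hy; split => //.
  apply: hr; [by exists y | exact: hdel].
- move=> x S1x; have [i _ hi] := hcov (f x) (ex_intro2 _ _ x S1x erefl).
  by exists i.
move=> m [F hF]; exists m, F => _ [x S1x <-].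
have [k _ [_ hk]] := hF x S1x; by exists k.
Qed.

Lemma compact_union2 (T : Type) (dd : T -> T -> \bar R) (S T1 T2 : set T) :
  T1 `<=` S -> T2 `<=` S -> S `<=` T1 `|` T2 ->
  compact_in dd T1 -> compact_in dd T2 -> compact_in dd S.
Proof.
move=> h1 h2 hS c1 c2 I U hU hcov.
have hres : forall Tk, Tk `<=` S -> forall i, open_in dd Tk (U i `&` Tk).
  move=> Tk hT i; split; first by move=> x [].
  move=> x [Ux Tx]; have [_ hUi] := hU i; have [r [r0 hr]] := hUi _ Ux.
  exists r; split => // y Ty hy; split => //; apply: hr => //; exact: hT.
have [m1 [F1 hF1]] := c1 I _ (hres _ h1) (fun x Tx => match hcov x (h1 x Tx) with ex_intro2 i a b => ex_intro2 _ _ i a (conj b Tx) end).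
have [m2 [F2 hF2]] := c2 I _ (hres _ h2) (fun x Tx => match hcov x (h2 x Tx) with ex_intro2 i a b => ex_intro2 _ _ i a (conj b Tx) end).
apply: (@fin_of_list _ _ S U (map F1 (enum 'I_m1) ++ map F2 (enum 'I_m2))).
move=> x /hS [Tx|Tx].
- have [j _ [hj _]] := hF1 x Tx; exists (F1 j); split => //.
  apply: In_catl; apply: In_map; exact: In_enum.
- have [j _ [hj _]] := hF2 x Tx; exists (F2 j); split => //.
  apply: In_catr; apply: In_map; exact: In_enum.
Qed.

Lemma compact_eq (T : Type) (dd : T -> T -> \bar R) (S1 S2 : set T) :
  S1 = S2 -> compact_in dd S1 -> compact_in dd S2.
Proof. by move=> ->. Qed.

Lemma compact_bigunion (T : Type) (dd : T -> T -> \bar R) (S : set T) (Tk : nat -> set T) n :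
  (forall k, (k <= n)%N -> Tk k `<=` S /\ compact_in dd (Tk k)) ->
  S `<=` [set x | exists k, (k <= n)%N /\ Tk k x] ->
  compact_in dd S.
Proof.
move=> hT hS.
suff : compact_in dd [set x | exists k, (k <= n)%N /\ Tk k x].
  apply: compact_eq; apply/seteqP; split => // x [k [hk hx]]; exact: (proj1 (hT k hk)).
have : forall k, (k <= n)%N -> compact_in dd (Tk k) by move=> k /hT [].
elim: n {hT hS} => [|n IH] hc.
- apply: (@compact_eq _ _ (Tk 0%N)); last exact: hc.
  apply/seteqP; split => [x hx|x [k [hk hx]]]; first by exists 0%N.
  by move: hk; rewrite leqn0 => /eqP <-.
- apply: (@compact_union2 _ _ _ [set x | exists k, (k <= n)%N /\ Tk k x] (Tk n.+1)).
  + by move=> x [k [hk hx]]; exists k; split => //; exact: leqW.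
  + by move=> x hx; exists n.+1.
  + move=> x [k [hk hx]]; move: hk; rewrite leq_eqVlt => /orP [/eqP Hk|hk]; first by right; rewrite -Hk.
    by left; exists k.
  + by apply: IH => k hk; apply: hc; exact: leqW.
  + exact: hc.
Qed.

End Gen.

Section Lists.
Variables (R : realType) (X : Type) (d : X -> X -> \bar R).
Hypothesis hd : is_metric d.

Fixpoint Dl (xs ys : seq X) : \bar R :=
  match xs, ys with
  | x :: xs', y :: ys' => Order.max (d x y) (Dl xs' ys')
  | _, _ => 0%E
  end.

Definition Sk (k : nat) : set (seq X) := [set s | size s = k].

Lemma Dl_ge0 xs ys : (0 <= Dl xs ys)%E.
Proof.
elim: xs ys => [|x xs IH] [|y ys] //=.
case: hd => h0 _ _ _; by rewrite le_max h0.
Qed.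

Lemma Dl_tri xs ys zs : size xs = size ys -> size ys = size zs ->
  (Dl xs zs <= Dl xs ys + Dl ys zs)%E.
Proof.
elim: xs ys zs => [|x xs IH] [|y ys] [|z zs] //=; first by rewrite adde0.
move=> [h1] [h2]; case: hd => h0 _ _ htri.
rewrite ge_max; apply/andP; split.
- apply: (le_trans (htri x y z)); apply: leeD; by rewrite le_max lexx.
- apply: (le_trans (IH _ _ h1 h2)); apply: leeD; by rewrite le_max lexx orbT.
Qed.

Lemma Dl_refl xs : Dl xs xs = 0%E.
Proof.
elim: xs => //= x xs ->; case: hd => h0 hxx _ _; by rewrite hxx maxxx.
Qed.

Lemma Dl_nth x0 xs ys i : size xs = size ys -> (i < size xs)%N ->
  (d (nth x0 xs i) (nth x0 ys i) <= Dl xs ys)%E.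
Proof.
elim: xs ys i => [|x xs IH] [|y ys] [|i] //= [h] hi; first by rewrite le_max lexx.
rewrite le_max; apply/orP; right; exact: IH.
Qed.

Lemma pos_min (l : seq R) : (forall e, e \in l -> 0 < e) ->
  exists rho : R, 0 < rho /\ forall e, e \in l -> rho <= e.
Proof.
elim: l => [|a l IH] h; first by exists 1; split.
have [rho [r0 hr]] := IH (fun e he => h e (@mem_behead _ (a :: l) e he)).
have ha : 0 < a by apply: h; rewrite mem_head.
exists (Num.min a rho); split; first by rewrite lt_min ha r0.
move=> e; rewrite in_cons => /orP [/eqP ->|he]; first by rewrite ge_min lexx.
by rewrite ge_min hr // orbT.
Qed.

Hypothesis hX : compact_in d setT.

Lemma compact_Sk k : compact_in Dl (Sk k).
Proof.
have [h0 hxx hsym htri] := hd.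
elim: k => [|k IH].
  move=> I U hU hcov.
  have [i0 _ hi0] := hcov [::] (erefl : Sk 0 [::]).
  exists 1%N, (fun=> i0) => s; rewrite /Sk /= => /size0nil ->; by exists ord0.
move=> I U hU hcov.
have step1 : forall x : X, exists sr : seq I * R, 0 < sr.2 /\
    forall x', (d x x' < sr.2%:E)%E -> forall ys, Sk k ys ->
      exists i, Stdlib.Lists.List.In i sr.1 /\ U i (x' :: ys).
  move=> x.
  pose J := (I * {r : R | 0 < r})%type.
  pose O := fun j : J => [set ys | Sk k ys /\ exists s : R, 0 < s /\
     forall x', (d x x' < (sval j.2)%:E)%E -> forall ys', Sk k ys' ->
       (Dl ys ys' < (sval j.2 + s)%:E)%E -> U j.1 (x' :: ys')].
  have := IH J O.
  case.
  - move=> j; split; first by move=> ys [].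
    move=> ys [Sys [s [s0 hs]]]; exists (s / 2); split; first by rewrite divr_gt0.
    move=> ys'' Sys'' hys''; split => //; exists (s / 2); split; first by rewrite divr_gt0.
    move=> x' hx' ys' Sys' hys'; apply: hs => //.
    apply: (le_lt_trans (Dl_tri (ys:=ys'') _ _)); [by rewrite Sys Sys''|by rewrite Sys'' Sys'|].
    rewrite (_ : sval j.2 + s = s / 2 + (sval j.2 + s / 2)); last by rewrite addrCA -splitr.
    rewrite EFinD; exact: lteD.
  - move=> ys Sys.
    have Sxys : Sk k.+1 (x :: ys) by rewrite /Sk /= Sys.
    have [i _ hi] := hcov _ Sxys.
    have [_ hUi] := hU i; have [r [r0 hr]] := hUi _ hi.
    have r20 : 0 < r / 2 by rewrite divr_gt0.
    exists (i, exist _ (r / 2) r20) => //; split => //; exists (r / 2); split => //.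
    move=> x' hx' ys' Sys' hys'; apply: hr; first by rewrite /Sk /= Sys'.
    rewrite /= gt_max; apply/andP; split; last by rewrite -splitr in hys'.
    by apply: (lt_trans hx'); rewrite lte_fin ltr_pdivrMr // ltr_pMr // ltr1n.
  move=> m [F hF].
  have [rho [rho0 hrho]] := @pos_min (map (fun j => sval (F j).2) (enum 'I_m))
    (fun e => fun he => match mapP he with ex_intro2 j _ ej => ltac:(rewrite ej; exact: (svalP (F j).2)) end).
  exists (map (fun j => (F j).1) (enum 'I_m), rho); split => //=.
  move=> x' hx' ys Sys.
  have [j _ [_ [s [s0 hs]]]] := hF ys Sys.
  exists (F j).1; split; first by apply: (In_map (fun j => (F j).1)); exact: In_enum.
  apply: hs => //.
    apply: (lt_le_trans hx'); rewrite lee_fin; apply: hrho.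
    by apply/mapP; exists j => //; rewrite mem_enum.
  rewrite Dl_refl lte_fin; apply: addr_gt0 => //; exact: (svalP (F j).2).
have [sr hsr] := choice step1.
pose G := fun x : X => [set x'' | setT x'' /\ exists t : R, 0 < t /\ forall x', setT x' ->
   (d x'' x' < t%:E)%E -> forall ys, Sk k ys ->
      exists i, Stdlib.Lists.List.In i (sr x).1 /\ U i (x' :: ys)].
have hGo : forall x, open_in d setT (G x).
  move=> x; exact: (interior_open _ _ h0 htri).
have hGc : setT `<=` \bigcup_x G x.
  move=> x _; exists x => //; split => //; exists (sr x).2.
  have [hp hq] := hsr x; split => // x' _; exact: hq.
have [M [Fx hFx]] := hX hGo hGc.
apply: (fin_of_list (s := flatten (map (fun l => (sr (Fx l)).1) (enum 'I_M)))).
case => [|x' ys] //= [Sys].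
have [l _ [_ [t [t0 ht]]]] := hFx x' Logic.I.
have [i [hi hU']] := ht x' Logic.I ltac:(by rewrite hxx lte_fin) ys Sys.
exists i; split => //.
apply: (In_flatten _ hi); apply: (In_map (fun l => (sr (Fx l)).1)); exact: In_enum.
Qed.

End Lists.

Section LP.
Variable R : realType.

Lemma sum_pow_bound (r del : R) (l : seq (\bar R)) : 1 <= r -> del <= 1 ->
  (forall e, e \in l -> (0 <= e)%E /\ (e < del%:E)%E) ->
  exists s : R, (\sum_(e <- l) (e `^ r))%E = s%:E /\ 0 <= s /\ s <= (size l)%:R * del.
Proof.
move=> r1 del1; elim: l => [|e l IH] h; first by exists 0; rewrite big_nil mul0r lexx.
have [s [hs [s0 sle]]] := IH (fun e' he' => h e' (@mem_behead _ (e :: l) e' he')).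
have [e0 edel] := h e (mem_head e l).
case: e e0 edel {h} => [x| |] //= x0 xdel.
rewrite lee_fin in x0; rewrite lte_fin in xdel.
have hxr : 0 <= x `^ r <= x.
  rewrite powR_ge0 /=; move: x0; rewrite le_eqVlt => /orP [/eqP <-|xp].
    rewrite powR0 //; apply/negP => /eqP r0; move: r1; rewrite r0 ler10 //.
  apply: ge1r_powR => //; rewrite xp /=; exact: (le_trans (ltW xdel) del1).
exists (x `^ r + s); rewrite big_cons hs poweR_EFin EFinD; split => //.
case/andP: hxr => hx1 hx2; split; first exact: addr_ge0.
rewrite /= -add1n natrD mulrDl mul1r; apply: lerD => //.
exact: (le_trans hx2 (ltW xdel)).
Qed.

Lemma lp_small (p : \bar R) (N : nat) (eps : R) : (1%:E <= p)%E -> 0 < eps ->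
  exists del : R, 0 < del /\ forall l : seq (\bar R), (size l <= N)%N ->
    (forall e, e \in l -> (0 <= e)%E /\ (e < del%:E)%E) -> (lp_norm p l < eps%:E)%E.
Proof.
move=> hp eps0.
case: p hp => [r| |] hp /=.
- rewrite lee_fin in hp.
  have r0 : 0 < r by apply: lt_le_trans hp.
  have er0 : 0 < eps `^ r by apply: powR_gt0.
  have N0 : 0 < (N.+1)%:R :> R by rewrite ltr0n.
  exists (Num.min 1 (eps `^ r / (N.+1)%:R)); split.
    by rewrite lt_min ltr01 divr_gt0.
  move=> l hl he.
  have hd1 : Num.min 1 (eps `^ r / (N.+1)%:R) <= 1 by rewrite ge_min lexx.
  have [s [-> [s0 sle]]] := sum_pow_bound hp hd1 he.
  rewrite poweR_EFin lte_fin.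
  have ri0 : 0 < r^-1 by rewrite invr_gt0.
  have -> : eps = (eps `^ r) `^ r^-1 by rewrite -powRrM mulfV ?powRr1 // ?ltW // gt_eqF.
  apply: (gt0_ltr_powR ri0); rewrite ?nnegrE ?powR_ge0 //.
  apply: (le_lt_trans sle).
  apply: (@le_lt_trans _ _ (N%:R * (eps `^ r / (N.+1)%:R))).
    apply: ler_pM => //.
    + by rewrite le_min ler01 divr_ge0 ?ltW.
    + by rewrite ler_nat.
    + by rewrite ge_min lexx orbT.
  rewrite mulrCA -[ltRHS]mulr1 ltr_pM2l //.
  by rewrite ltr_pdivrMr // mul1r ltr_nat.
- exists eps; split => // l _ he.
  elim: l he => [|e l IH] he; first by rewrite big_nil lte_fin.
  rewrite big_cons gt_max (he e (mem_head e l)).2 /=.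
  apply: IH => e' he'; apply: he; exact: mem_behead.
- by exists eps; split => // l _ he.
Qed.

End LP.

Section Match.
Variables (R : realType) (X : Type) (d : X -> X -> \bar R) (A : set X).

Definition afil (x : X) : bool := ~~ `[< A x >].

Lemma filter_nth (x0 : X) (s : seq X) :
  seq.filter afil s = map (nth x0 s) (seq.filter (fun i => afil (nth x0 s i)) (iota 0 (size s))).
Proof. by rewrite -{1}(mkseq_nth x0 s) /mkseq filter_map. Qed.

Lemma size_costs (xs ys : seq X) phi z w :
  (size (@matching_costs R X d xs ys phi z w) <= size xs + size ys)%N.
Proof.
rewrite /matching_costs size_cat !size_map -enumT size_enum_ord leq_add2l size_filter.
by apply: leq_trans (count_size _ _) _; rewrite size_enum_ord.
Qed.

Lemma match_filter (x0 : X) (xs ys : seq X) : size xs = size ys ->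
  exists phi z w, @is_matching X A (seq.filter afil xs) (seq.filter afil ys) phi z w /\
   forall e, e \in @matching_costs R X d _ _ phi z w ->
     exists i, (i < size xs)%N /\ e = d (nth x0 xs i) (nth x0 ys i).
Proof.
move=> hs.
rewrite (filter_nth x0 xs) (filter_nth x0 ys).
set Ix := seq.filter _ (iota 0 (size xs)).
set Iy := seq.filter _ (iota 0 (size ys)).
have memIx : forall i, (i \in Ix) = afil (nth x0 xs i) && (i < size xs)%N.
  by move=> i; rewrite mem_filter mem_iota add0n leq0n.
have memIy : forall i, (i \in Iy) = afil (nth x0 ys i) && (i < size ys)%N.
  by move=> i; rewrite mem_filter mem_iota add0n leq0n.
have uIx : uniq Ix by rewrite filter_uniq // iota_uniq.
have uIy : uniq Iy by rewrite filter_uniq // iota_uniq.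
pose phi := fun j : 'I_(size (map (nth x0 xs) Ix)) =>
  (insub (index (nth 0%N Ix j) Iy) : option 'I_(size (map (nth x0 ys) Iy))).
pose z := fun j : 'I_(size (map (nth x0 xs) Ix)) => nth x0 ys (nth 0%N Ix j).
pose w := fun m : 'I_(size (map (nth x0 ys) Iy)) => nth x0 xs (nth 0%N Iy m).
have hjx : forall j : 'I_(size (map (nth x0 xs) Ix)), (j < size Ix)%N.
  by move=> j; rewrite -(size_map (nth x0 xs)).
have hmy : forall m : 'I_(size (map (nth x0 ys) Iy)), (m < size Iy)%N.
  by move=> m; rewrite -(size_map (nth x0 ys)).
have inIx : forall j : 'I_(size (map (nth x0 xs) Ix)), nth 0%N Ix j \in Ix.
  by move=> j; apply: mem_nth.
have inIy : forall m : 'I_(size (map (nth x0 ys) Iy)), nth 0%N Iy m \in Iy.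
  by move=> m; apply: mem_nth.
have phiS : forall j m, phi j = Some m -> nth 0%N Iy m = nth 0%N Ix j.
  move=> j m; rewrite /phi; case: insubP => // u hu hv [<-].
  move: hv => /= ->; apply: nth_index; by rewrite -index_mem -(size_map (nth x0 ys)).
have phiN : forall j, phi j = None -> nth 0%N Ix j \notin Iy.
  move=> j; rewrite /phi; case: insubP => // hn _.
  by move: hn; rewrite (size_map (nth x0 ys) Iy) index_mem.
exists phi, z, w; split.
- split.
  + move=> j j' m h1 h2; apply: val_inj => /=.
    apply/eqP; rewrite -(nth_uniq 0%N (hjx j) (hjx j') uIx).
    by rewrite -(phiS _ _ h1) -(phiS _ _ h2).
  + move=> j /phiN; rewrite /z memIy.
    have := inIx j; rewrite memIx => /andP [_ hi].
    rewrite -hs hi andbT /afil negbK; by move/asboolP.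
  + move=> m hm; rewrite /w.
    have := inIy m; rewrite memIy => /andP [_ hi].
    case: (boolP `[< A (nth x0 xs (nth 0%N Iy m)) >]) => [/asboolP //|hna].
    exfalso.
    have hIx : nth 0%N Iy m \in Ix by rewrite memIx /afil hna hs hi.
    have hj : (index (nth 0%N Iy m) Ix < size (map (nth x0 xs) Ix))%N.
      by rewrite (size_map (nth x0 xs) Ix) index_mem.
    apply: (hm (Ordinal hj)).
    rewrite /phi /= nth_index // index_uniq //; exact: valK.
- move=> e; rewrite mem_cat => /orP [/mapP [j _ ->]|/mapP [m _ ->]].
  + exists (nth 0%N Ix j); split.
      by have := inIx j; rewrite memIx => /andP [].
    case E: (phi j) => [m|].
    * rewrite !(tnth_nth x0) /= !(nth_map 0%N) ?hjx ?hmy //.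
      by rewrite (phiS _ _ E).
    * by rewrite !(tnth_nth x0) /= !(nth_map 0%N) ?hjx.
  + exists (nth 0%N Iy m); split.
      by have := inIy m; rewrite memIy hs => /andP [].
    by rewrite !(tnth_nth x0) /= !(nth_map 0%N) ?hmy.
Qed.

End Match.

Section Final.
Variables (R : realType) (X : Type) (d : X -> X -> \bar R) (A : set X) (p : \bar R).
Hypothesis hd : is_metric d.

Lemma Wp_filter_le (xs ys : seq X) : size xs = size ys ->
  exists l, (Wp d A p (seq.filter (afil A) xs) (seq.filter (afil A) ys) <= lp_norm p l)%E /\
    (size l <= size xs + size ys)%N /\
    forall e, e \in l -> (0 <= e)%E /\ (e <= Dl d xs ys)%E.
Proof.
have [h0 hxx hsym htri] := hd.
case: xs => [|x0 xs'] hs.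
  have ys0 : ys = [::] by apply: size0nil; rewrite -hs.
  subst ys => /=.
  pose phi := fun _ : 'I_0 => (None : option 'I_0).
  pose z := tnth (in_tuple ([::] : seq X)).
  exists (@matching_costs R X d [::] [::] phi z z); split; last split.
  - apply: ereal_inf_lbound; exists phi, z, z; split => //.
    by split => //; case.
  - exact: size_costs.
  - move=> e he; have := @size_costs R X d [::] [::] phi z z; rewrite leqn0 => /eqP /size0nil hl.
    by rewrite hl in he.
have [phi [z [w [hm hc]]]] := match_filter d A x0 hs.
exists (@matching_costs R X d _ _ phi z w); split; last split.
- apply: ereal_inf_lbound; by exists phi, z, w.
- apply: leq_trans (size_costs _ _ _ _) _.
  by apply: leq_add; rewrite size_filter count_size.
- move=> e /hc [i [hi ->]]; split => //; exact: Dl_nth.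
Qed.

Hypothesis hp : (1%:E <= p)%E.

Lemma filter_cont k xs : Sk k xs -> forall eps : R, 0 < eps -> exists del : R, 0 < del /\
  forall ys, Sk k ys -> (Dl d xs ys < del%:E)%E ->
    (Wp d A p (seq.filter (afil A) xs) (seq.filter (afil A) ys) < eps%:E)%E.
Proof.
move=> Sxs eps eps0.
have [del [del0 hdel]] := lp_small (k + k) hp eps0.
exists del; split => // ys Sys hD.
have [l [hle [hsz he]]] := Wp_filter_le (etrans Sxs (esym Sys)).
apply: (le_lt_trans hle); apply: hdel.
  by rewrite -{1}Sxs -Sys.
move=> e /he [e0 eD]; split => //; exact: le_lt_trans hD.
Qed.

End Final.

Unset Implicit Arguments.

Theorem proposition7p8 (R : realType) (X : Type) (d : X -> X -> \bar R)
    (A : set X) (p : \bar R) :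
  is_metric d -> closed_set d A -> (1%:E <= p)%E ->
  compact_in d setT ->
  forall n : nat, compact_in (Wp d A p) (Dn A n).
Proof.
move=> hd hA hp hX n.
apply: (@compact_bigunion R _ _ _ (fun k => (seq.filter (afil A)) @` Sk k) n).
- move=> k hk; split.
  + move=> _ [xs Sxs <-]; split.
      by rewrite size_filter (leq_trans (count_size _ _)) // Sxs.
    move=> i.
    set t := tnth _ i.
    have e : t = nth t (seq.filter (afil A) xs) i := tnth_nth t _ i.
    have := filter_all (afil A) xs.
    move/(all_nthP t) => h.
    have := h i (ltn_ord i); rewrite -e /afil => /negP hn hA'.
    by apply: hn; apply/asboolP.
  + have hc := @compact_Sk _ _ _ hd hX k.
    move: (@compact_image R _ _ (Dl d) (Wp d A p) (Sk k) (seq.filter (afil A)) hc) => H.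
    apply: H.
    move=> xs Sxs eps eps0; exact: filter_cont.
- move=> s [hs hi]; exists (size s); split => //; exists s => //.
  apply/all_filterP.
  case: s hs hi => [|x0 s'] // hs hi; apply/(all_nthP x0) => i hi'.
  have := hi (Ordinal hi'); rewrite (tnth_nth x0) /afil /= => hnA.
  by apply/negP => /asboolP.
Qed.
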